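(* Suppose that $|Y|\ge 3$, that every model $j\in\{1,\dots,m\}$ is an unconstrained learner, and that $C$ is a nondegenerate ensemble choice aggregator on $S(Y)$. Then: (1) there exists $S^*\subseteq S(Y)$ such that $C$ violates on $S^*$ at least one of the following three properties: insertion/deletion consistency, ensemble unanimity, model choice reversal; (2) if moreover the map $s:X\to S(Y)$ is surjective, then this $S^*$ is observable by $s$.
   Context: Let $Y$ be a nonempty set of labels, $X$ a set (the feature space), and $m\ge 2$ an integer (the number of models). For each $j\in\{1,\dots,m\}$ let $S_j(Y)\subseteq\mathbb{R}^{|Y|}$ be a set of score vectors whose coordinates are indexed by labels (write $w_{d(y)}$ for the coordinate of $w$ corresponding to label $y$), and let $S(Y)=\prod_{j=1}^m S_j(Y)$. An element $z\in S(Y)$ is written $z=(z_{j,d(y)})_{j,y}$, where $z_{j,d(y)}$ denotes model $j$'s score for label $y$. Each model has a scoring function $s_j:X\to S_j(Y)$, and $s:X\to S(Y)$ is $s(x)=(s_j(x))_{j=1}^m$. Model $j$ is an unconstrained learner if for every complete and transitive binary relation $R$ on $Y$, $S_j(Y)\cap W(Y,R)\neq\emptyset$, where $W(Y,R)=\{w\in\mathbb{R}^{|Y|}: \text{for all } y,y'\in Y,\ y\,R\,y' \iff w_{d(y)}\ge w_{d(y')}\}$. A set $S^*\subseteq S(Y)$ is observable by $s$ if for every $z\in S^*$ there is $x\in X$ with $s(x)=z$. An ensemble choice aggregator is a set-valued function $C:(2^Y\setminus\{\emptyset\})\times S(Y)\to 2^Y\setminus\{\emptyset\}$ such that for every nonempty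 $Y^*\subseteq Y$ and every $z\in S(Y)$: (i) $C(Y^*,z)\subseteq Y^*$; and (ii) for every $y\in Y^*$, if there does not exist $y'\in Y^*$ with $\{y'\}=C(\{y,y'\},z)$, then $y\in C(Y^*,z)$. $C$ is nondegenerate if there is no $j$ such that for all $y,y'\in Y$ and all $z\in S(Y)$, $z_{j,d(y)}>z_{j,d(y')}$ implies $\{y\}=C(\{y,y'\},z)$. Insertion/deletion consistency: for all $z\in S(Y)$ and all nonempty $Y_1^*\subseteq Y_2^*\subseteq Y$, $Y_1^*\cap C(Y_2^*,z)\neq\emptyset$ implies $C(Y_1^*,z)=Y_1^*\cap C(Y_2^*,z)$. Ensemble unanimity: for all $y,y'\in Y$ and all $z\in S(Y)$, if $z_{j,d(y)}>z_{j,d(y')}$ for all $j$ then $\{y\}=C(\{y,y'\},z)$. Model choice reversal: for all $y,y'\in Y$ and all $z,z'\in S(Y)$, whenever $y\in C(\{y,y'\},z)$, $y'\notin C(\{y,y'\},z)$ and $y'\in C(\{y,y'\},z')$, there exists $j$ with $z_{j,d(y)}>z_{j,d(y')}$ and $z'_{j,d(y)}<z'_{j,d(y')}$. ''$C$ violates a property on $S^*$'' means that the property fails when its universal quantification over score profiles is restricted to profiles in $S^*$ (i.e. the failure is witnessed by profiles in $S^*$). *)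

(* Defs.v *)
From HB Require Import structures.
From mathcomp Require Import all_boot all_order all_algebra.
From mathcomp Require Import reals.
Set Implicit Arguments. Unset Strict Implicit. Unset Printing Implicit Defensive.
Import Order.TTheory GRing.Theory Num.Theory.
Local Open Scope ring_scope.

(* A score vector in R^{|Y|} is a function Y -> R
   (coordinate w_{d(y)} is  w y).
   A score ens_profile z in S(Y) = prod_j S_j(Y) is a function 'I_m -> Y -> R,
   with z j y = z_{j,d(y)}. *)

Definition ens_profile (R : realType) (Y : finType) (m : nat) := 'I_m -> Y -> R.

Definition ens_in_SY (R : realType) (Y : finType) (m : nat)
  (Sj : 'I_m -> (Y -> R) -> Prop) (z : ens_profile R Y m) : Prop :=
  forall j, Sj j (z j).

Definition ens_complete_rel (Y : Type) (Rel : Y -> Y -> Prop) :=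
  forall y y', Rel y y' \/ Rel y' y.
Definition ens_transitive_rel (Y : Type) (Rel : Y -> Y -> Prop) :=
  forall y1 y2 y3, Rel y1 y2 -> Rel y2 y3 -> Rel y1 y3.

Definition ens_W (R : realType) (Y : finType) (Rel : Y -> Y -> Prop) (w : Y -> R) :=
  forall y y', Rel y y' <-> w y' <= w y.

Definition ens_unconstrained_learner (R : realType) (Y : finType)
  (Sj : (Y -> R) -> Prop) : Prop :=
  forall Rel : Y -> Y -> Prop, ens_complete_rel Rel -> ens_transitive_rel Rel ->
    exists w, Sj w /\ ens_W Rel w.

Definition ens_aggregator (R : realType) (Y : finType) (m : nat) :=
  {set Y} -> ens_profile R Y m -> {set Y}.

Definition ens_ensemble_choice_aggregator (R : realType) (Y : finType) (m : nat)
  (Sj : 'I_m -> (Y -> R) -> Prop) (C : ens_aggregator R Y m) : Prop :=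
  forall (Ystar : {set Y}) (z : ens_profile R Y m), Ystar != set0 -> ens_in_SY Sj z ->
    [/\ C Ystar z != set0,
        C Ystar z \subset Ystar &
        forall y, y \in Ystar ->
          ~ (exists y', y' \in Ystar /\ C [set y; y'] z = [set y']) ->
          y \in C Ystar z].

Definition ens_nondegenerate (R : realType) (Y : finType) (m : nat)
  (Sj : 'I_m -> (Y -> R) -> Prop) (C : ens_aggregator R Y m) : Prop :=
  ~ exists j : 'I_m, forall (y y' : Y) (z : ens_profile R Y m), ens_in_SY Sj z ->
      z j y' < z j y -> C [set y; y'] z = [set y].

Definition ens_insertion_deletion_consistency_on (R : realType) (Y : finType) (m : nat)
  (Sstar : ens_profile R Y m -> Prop) (C : ens_aggregator R Y m) : Prop :=
  forall (z : ens_profile R Y m) (Y1 Y2 : {set Y}), Sstar z ->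
    Y1 != set0 -> Y1 \subset Y2 ->
    Y1 :&: C Y2 z != set0 -> C Y1 z = Y1 :&: C Y2 z.

Definition ens_ensemble_unanimity_on (R : realType) (Y : finType) (m : nat)
  (Sstar : ens_profile R Y m -> Prop) (C : ens_aggregator R Y m) : Prop :=
  forall (y y' : Y) (z : ens_profile R Y m), Sstar z ->
    (forall j, z j y' < z j y) -> C [set y; y'] z = [set y].

Definition ens_model_choice_reversal_on (R : realType) (Y : finType) (m : nat)
  (Sstar : ens_profile R Y m -> Prop) (C : ens_aggregator R Y m) : Prop :=
  forall (y y' : Y) (z z' : ens_profile R Y m), Sstar z -> Sstar z' ->
    y \in C [set y; y'] z -> y' \notin C [set y; y'] z ->
    y' \in C [set y; y'] z' ->
    exists j, z j y' < z j y /\ z' j y < z' j y'.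

Definition ens_observable (R : realType) (Y : finType) (m : nat) (X : Type)
  (s : X -> ens_profile R Y m) (Sstar : ens_profile R Y m -> Prop) : Prop :=
  forall z, Sstar z -> exists x, s x = z.

(* Main.v *)
Require Import Defs.
From HB Require Import structures.
From mathcomp Require Import all_boot all_order all_algebra.
From mathcomp Require Import reals.
From mathcomp Require Import boolp.
From mathcomp Require Import lra.
Import Order.TTheory GRing.Theory Num.Theory.
Local Open Scope ring_scope.
Set Implicit Arguments. Unset Strict Implicit.

Section Arrow.
Variables (R : realType) (Y : finType) (m : nat)
  (Sj : 'I_m -> (Y -> R) -> Prop) (C : ens_aggregator R Y m).
Hypothesis agg : ens_ensemble_choice_aggregator Sj C.
Hypothesis idc : ens_insertion_deletion_consistency_on (ens_in_SY Sj) C.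
Hypothesis una : ens_ensemble_unanimity_on (ens_in_SY Sj) C.
Hypothesis mcr : ens_model_choice_reversal_on (ens_in_SY Sj) C.
Hypothesis unc : forall j, ens_unconstrained_learner (Sj j).
Hypothesis Y3 : (3 <= #|Y|)%N.

Local Notation S := (ens_in_SY Sj).
Definition W z (a b : Y) := a \in C [set a; b] z.

Lemma pair_ne (a b : Y) : [set a; b] != set0.
Proof. by apply/set0Pn; exists a; rewrite !inE eqxx. Qed.

Lemma W_total z a b : S z -> W z a b \/ W z b a.
Proof.
move=> Sz; have [ne sub _] := agg (pair_ne a b) Sz.
have /set0Pn [t tC] := ne.
move: (subsetP sub t tC); rewrite !inE => /orP [/eqP ta|/eqP tb]; subst t.
  by left.
by right; rewrite /W setUC.
Qed.

Lemma W_trans z a b c : S z -> W z a b -> W z b c -> W z a c.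
Proof.
move=> Sz Hab Hbc.
have neT : [set a; b; c] != set0 by apply/set0Pn; exists a; rewrite !inE eqxx.
have [neC subT _] := agg neT Sz.
set T := C [set a; b; c] z.
have key : forall (Y1 : {set Y}) t, Y1 \subset [set a; b; c] -> t \in Y1 -> t \in T ->
    C Y1 z = Y1 :&: T.
  move=> Y1 t sub tY tT; apply: idc => //.
    by apply/set0Pn; exists t.
  by apply/set0Pn; exists t; rewrite inE tY.
case: (boolP (a \in C [set a; c] z)) => // Hac.
have aT : a \notin T.
  apply/negP=> aT; move/negP: Hac; apply.
  rewrite (key _ a) //; first by rewrite inE aT !inE eqxx.
    by apply/subsetP=> t; rewrite !inE => /orP [->|->]; rewrite ?orbT.
  by rewrite !inE eqxx.
have bT : b \notin T.
  apply/negP=> bT; move/negP: aT; apply.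
  move: Hab; rewrite /W (key _ b) //.
  - by rewrite inE => /andP [].
  - by apply/subsetP=> t; rewrite !inE => /orP [->|->]; rewrite ?orbT.
  - by rewrite !inE eqxx orbT.
have cT : c \notin T.
  apply/negP=> cT; move/negP: bT; apply.
  move: Hbc; rewrite /W (key _ c) //.
  - by rewrite inE => /andP [].
  - by apply/subsetP=> t; rewrite !inE => /orP [->|->]; rewrite ?orbT.
  - by rewrite !inE eqxx orbT.
have /set0Pn [t tT] := neC.
move: (subsetP subT t tT); rewrite !inE => /orP [/orP [/eqP ta|/eqP tb]|/eqP tc];
  subst t; by rewrite tT in aT bT cT.
Qed.

Lemma str1 z a b c : S z -> W z a b -> ~ W z c b -> ~ W z c a.
Proof. by move=> Sz Hab Hcb Hca; apply: Hcb; apply: W_trans Hca Hab. Qed.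

Lemma str2 z a b c : S z -> ~ W z b a -> W z b c -> ~ W z c a.
Proof. by move=> Sz Hba Hbc Hca; apply: Hba; apply: W_trans Hbc Hca. Qed.

Lemma str3 z a b c : S z -> ~ W z b a -> ~ W z c b -> ~ W z c a.
Proof.
move=> Sz Hba Hcb; have [Hab|//] := W_total a b Sz.
exact: str1 Hab Hcb.
Qed.

Lemma strict_eq z a b : S z -> a != b -> (C [set a; b] z = [set a] <-> ~ W z b a).
Proof.
move=> Sz ab; have [ne sub _] := agg (pair_ne a b) Sz; split.
  by rewrite /W setUC => -> ; rewrite inE eq_sym (negbTE ab).
rewrite /W setUC => nb; apply/setP => t; rewrite inE.
apply/idP/idP.
  move=> tC; move: (subsetP sub t tC); rewrite !inE => /orP [//|/eqP tb].
  by subst t; rewrite tC in nb.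
move=> /eqP ->; have /set0Pn [u uC] := ne.
move: (subsetP sub u uC); rewrite !inE => /orP [/eqP ua|/eqP ub]; subst u => //.
Qed.

Lemma pareto z a b : S z -> a != b -> (forall i, z i b < z i a) -> ~ W z b a.
Proof. by move=> Sz ab H; apply/(strict_eq Sz ab); apply: una. Qed.

Lemma iia z z' a b : S z -> S z' -> W z a b ->
  (forall i, z i b < z i a -> z' i b < z' i a) -> W z' a b.
Proof.
move=> Sz Sz' Hab H; case: (boolP (W z' a b)) => // nH.
have [h|Hba] := W_total a b Sz'; first by rewrite h in nH.
have := mcr Sz' Sz Hba _ _.
rewrite setUC; move=> /(_ nH Hab) [j [h1 h2]].
by have := H j h2; rewrite ltNge (ltW h1).
Qed.

Lemma realize (f : 'I_m -> Y -> R) :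
  exists z, S z /\ forall i y y', (z i y' < z i y <-> f i y' < f i y).
Proof.
have H : forall i, exists w, Sj i w /\ ens_W (fun y y' => f i y' <= f i y) w.
  move=> i; apply: unc.
    by move=> y y'; case: (lerP (f i y') (f i y)) => h; [left|right; apply: ltW].
  by move=> y1 y2 y3 h1 h2; apply: le_trans h2 h1.
have [w Hw] := choice H.
exists w; split; first by move=> i; case: (Hw i).
move=> i y y'; case: (Hw i) => _ HW.
rewrite !ltNge; case: (HW y' y) => h1 h2.
by split => /negP h3; apply/negP => h4; apply: h3; [apply: h1|apply: h2].
Qed.

Definition D (G : {set 'I_m}) a b := forall z, S z ->
  (forall i, i \in G -> z i b < z i a) -> ~ W z b a.
Definition E' (G : {set 'I_m}) a b := forall z, S z ->
  (forall i, i \in G -> z i b < z i a) ->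
  (forall i, i \notin G -> z i a < z i b) -> ~ W z b a.
Definition FD G := forall x y, x != y -> D G x y.

Lemma D_E' (G : {set 'I_m}) a b : D G a b -> E' G a b.
Proof. by move=> H z Sz H1 _; apply: H. Qed.

Lemma E_E' (G : {set 'I_m}) a b u : S u -> (forall i, i \in G -> u i b < u i a) ->
  (forall i, i \notin G -> u i a < u i b) -> ~ W u b a -> E' G a b.
Proof.
move=> Su H1 H2 H3 v Sv K1 K2 Hv; apply: H3; apply: (iia Sv Su Hv).
move=> i; case: (boolP (i \in G)) => iG.
  by move=> h; have := K1 i iG; rewrite ltNge (ltW h).
by move=> _; apply: H2.
Qed.

Definition sc3 (a b c t : Y) : R := if t == a then 2 else if t == b then 1 else 0.

Lemma sc3a a b c : sc3 a b c a = 2. Proof. by rewrite /sc3 eqxx. Qed.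
Lemma sc3b a b c : b != a -> sc3 a b c b = 1.
Proof. by move=> ba; rewrite /sc3 (negbTE ba) eqxx. Qed.
Lemma sc3c a b c : c != a -> c != b -> sc3 a b c c = 0.
Proof. by move=> ca cb; rewrite /sc3 (negbTE ca) (negbTE cb). Qed.

Lemma L1 (G : {set 'I_m}) a b c : E' G a b -> a != b -> c != a -> c != b ->
  D G a c /\ D G c b.
Proof.
move=> HE ab ca cb.
have ba : b != a by rewrite eq_sym.
have ac : a != c by rewrite eq_sym.
have bc : b != c by rewrite eq_sym.
split.
  move=> w Sw HG.
  pose f i t := if i \in G then sc3 a b c t
    else (if t == b then `|w i a| + `|w i c| + 1 else w i t).
  have [v [Sv Hv]] := realize f.
  have h1 : ~ W v b a.
    apply: HE => //.
      by move=> i iG; apply/Hv; rewrite /f iG sc3a sc3b //; lra.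
    move=> i iG; apply/Hv; rewrite /f (negbTE iG) eqxx (negbTE ab).
    have := ler_norm (w i a); have := normr_ge0 (w i c); lra.
  have h2 : ~ W v c b.
    apply: pareto => // i; apply/Hv; rewrite /f.
    case: (i \in G); first by rewrite sc3b // sc3c //; lra.
    rewrite eqxx (negbTE cb).
    have := ler_norm (w i c); have := normr_ge0 (w i a); lra.
  have h3 := str3 Sv h1 h2.
  move=> Hw; apply: h3; apply: (iia Sw Sv Hw) => i.
  case: (boolP (i \in G)) => iG.
    by move=> h; have := HG i iG; rewrite ltNge (ltW h).
  by move=> h; apply/Hv; rewrite /f (negbTE iG) (negbTE ab) (negbTE cb).
move=> w Sw HG.
pose f i t := if i \in G then sc3 c a b t
  else (if t == a then - (`|w i b| + `|w i c|) - 1 else w i t).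
have [v [Sv Hv]] := realize f.
have h1 : ~ W v a c.
  apply: pareto => // i; apply/Hv; rewrite /f.
  case: (i \in G); first by rewrite sc3a sc3b //; lra.
  rewrite eqxx (negbTE ca).
  have := ler_norm (- w i c); rewrite normrN; have := normr_ge0 (w i b); lra.
have h2 : ~ W v b a.
  apply: HE => //.
    by move=> i iG; apply/Hv; rewrite /f iG sc3b // sc3c //; lra.
  move=> i iG; apply/Hv; rewrite /f (negbTE iG) eqxx (negbTE ba).
  have := ler_norm (- w i b); rewrite normrN; have := normr_ge0 (w i c); lra.
have h3 := str3 Sv h1 h2.
move=> Hw; apply: h3; apply: (iia Sw Sv Hw) => i.
case: (boolP (i \in G)) => iG.
  by move=> h; have := HG i iG; rewrite ltNge (ltW h).
by move=> h; apply/Hv; rewrite /f (negbTE iG) (negbTE ca) (negbTE ba).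
Qed.

Lemma third (a b : Y) : exists c, c != a /\ c != b.
Proof.
case: (pickP (fun c => c \notin [set a; b])) => [c|H].
  by rewrite !inE negb_or => /andP [h1 h2]; exists c.
have : #|[set a; b]| = #|Y|.
  have -> : [set a; b] = setT.
    by apply/setP => t; rewrite in_setT; move: (H t) => /= /negbFE.
  by rewrite cardsT.
rewrite cards2 => h; move: Y3; rewrite -h; by case: (a != b).
Qed.

Lemma E'_FD (G : {set 'I_m}) a b : E' G a b -> a != b -> FD G.
Proof.
move=> HE ab x y xy.
have L1D : forall p q c, D G p q -> p != q -> c != p -> c != q ->
    D G p c /\ D G c q.
  by move=> p q c H; apply: L1; apply: D_E'.
have ns : forall u v : Y, u != v -> v != u by move=> u v; rewrite eq_sym.
case: (eqVneq x a) => [xa|xa]; [subst x|].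
  case: (eqVneq y b) => [yb|yb]; [subst y|].
    have [c [ca cb]] := third a b.
    have [Hac _] := L1 HE ab ca cb.
    by case: (L1D a c b Hac (ns _ _ ca) (ns _ _ ab) (ns _ _ cb)).
  by case: (L1 HE ab (ns _ _ xy) yb).
case: (eqVneq y b) => [yb|yb]; [subst y|].
  by case: (L1 HE ab xa xy).
case: (eqVneq x b) => [xb|xb]; [subst x|].
  case: (eqVneq y a) => [ya|ya]; [subst y|].
    have [c [ca cb]] := third a b.
    have [Hac _] := L1 HE ab ca cb.
    have [_ Hbc] := L1D a c b Hac (ns _ _ ca) (ns _ _ ab) (ns _ _ cb).
    by case: (L1D b c a Hbc (ns _ _ cb) ab (ns _ _ ca)).
  have [Hay _] := L1 HE ab ya yb.
  by case: (L1D a y b Hay (ns _ _ ya) (ns _ _ ab) (ns _ _ yb)).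
case: (eqVneq y a) => [ya|ya]; [subst y|].
  have [_ Hxb] := L1 HE ab xa xb.
  by case: (L1D x b a Hxb xb (ns _ _ xa) ab).
have [Hay _] := L1 HE ab ya yb.
by case: (L1D a y x Hay (ns _ _ ya) xa xy).
Qed.

Lemma three : exists x y z : Y, [/\ y != x, z != x & z != y].
Proof.
have /card_gt0P [x _] : (0 < #|Y|)%N by apply: leq_trans Y3.
have [y [yx _]] := third x x.
have [z [zx zy]] := third x y.
by exists x, y, z.
Qed.

Lemma contract (G : {set 'I_m}) j : FD G -> FD [set j] \/ FD (G :\ j).
Proof.
move=> HG; have [x [y [z [yx zx zy]]]] := three.
have xy : x != y by rewrite eq_sym.
have xz : x != z by rewrite eq_sym.
have yz : y != z by rewrite eq_sym.
pose f i t := if i == j then sc3 x y z t else if i \in G then sc3 z x y t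
  else sc3 y z x t.
have [v [Sv Hv]] := realize f.
have Hxy : ~ W v y x.
  apply: (HG x y xy v Sv) => i iG; apply/Hv; rewrite /f.
  case: (i == j); first by rewrite sc3a sc3b //; lra.
  by rewrite iG sc3b // sc3c //; lra.
case: (boolP (W v z x)) => Hzx.
  right; apply: (E'_FD (a := z) (b := y)) => //.
  apply: (E_E' Sv).
  - move=> i; rewrite !inE => /andP [ij iG]; apply/Hv.
    by rewrite /f (negbTE ij) iG sc3a sc3c //; lra.
  - move=> i; rewrite !inE negb_and negbK => /orP [/eqP ->|iG]; apply/Hv.
      by rewrite /f eqxx sc3b // sc3c //; lra.
    case: (eqVneq i j) => [->|ij]; first by rewrite /f eqxx sc3b // sc3c //; lra.
    by rewrite /f (negbTE ij) (negbTE iG) sc3a sc3b //; lra.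
  - exact: str1 Hzx Hxy.
left; apply: (E'_FD (a := x) (b := z)) => //.
apply: (E_E' Sv).
- by move=> i; rewrite inE => /eqP ->; apply/Hv; rewrite /f eqxx sc3a sc3c //; lra.
- move=> i; rewrite inE => ij; apply/Hv; rewrite /f (negbTE ij).
  case: (i \in G); first by rewrite sc3a sc3b //; lra.
  by rewrite sc3b // sc3c //; lra.
- by apply/negP.
Qed.

Lemma FD_setT : FD setT.
Proof. by move=> x y xy z Sz H; apply: pareto => // i; apply: H; rewrite inE. Qed.

Lemma FD_set0 : ~ FD set0.
Proof.
move=> H; have [x [y [_ [yx _ _]]]] := three.
pose f (i : 'I_m) (t : Y) : R := if t == y then 1 else 0.
have [v [Sv Hv]] := realize f.
have xy : x != y by rewrite eq_sym.
have h1 : ~ W v y x by apply: (H x y xy v Sv) => i; rewrite inE.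
have h2 : ~ W v x y.
  apply: pareto => // i; apply/Hv; rewrite /f eqxx eq_sym (negbTE yx); lra.
by case: (W_total y x Sv).
Qed.

Lemma dictator : exists j, FD [set j].
Proof.
suff : forall n (G : {set 'I_m}), (#|G| <= n)%N -> FD G -> exists j, FD [set j].
  by move=> /(_ #|[set: 'I_m]| setT (leqnn _) FD_setT).
elim=> [|n IH] G.
  by rewrite leqn0 => /eqP/cards0_eq -> /FD_set0.
move=> Hn HG; case: (set_0Vmem G) => [G0|[j jG]].
  by move: HG; rewrite G0 => /FD_set0.
case: (contract j HG) => [H|H]; first by exists j.
apply: (IH (G :\ j)) => //.
by move: Hn; rewrite (cardsD1 j G) jG.
Qed.

End Arrow.

Theorem theorem1 (R : realType) (Y : finType) (X : Type) (m : nat)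
  (Sj : 'I_m -> (Y -> R) -> Prop) (s : X -> ens_profile R Y m)
  (C : ens_aggregator R Y m) :
  (3 <= #|Y|)%N -> (2 <= m)%N ->
  (forall x, ens_in_SY Sj (s x)) ->
  (forall j, ens_unconstrained_learner (Sj j)) ->
  ens_ensemble_choice_aggregator Sj C ->
  ens_nondegenerate Sj C ->
  exists Sstar : ens_profile R Y m -> Prop,
    (forall z, Sstar z -> ens_in_SY Sj z) /\
    (~ ens_insertion_deletion_consistency_on Sstar C \/
     ~ ens_ensemble_unanimity_on Sstar C \/
     ~ ens_model_choice_reversal_on Sstar C) /\
    ((forall z, ens_in_SY Sj z -> exists x, s x = z) -> ens_observable s Sstar).
Proof.
move=> Y3 m2 _ unc agg nd.
exists (ens_in_SY Sj); split => //; split; last by move=> surj z Sz; apply: surj.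
have [idc|nidc] := EM (ens_insertion_deletion_consistency_on (ens_in_SY Sj) C);
  last by left.
have [una|nuna] := EM (ens_ensemble_unanimity_on (ens_in_SY Sj) C);
  last by right; left.
have [mcr|nmcr] := EM (ens_model_choice_reversal_on (ens_in_SY Sj) C);
  last by right; right.
exfalso; apply: nd.
have [j Hj] := dictator agg idc una mcr unc Y3.
exists j => y y' z Sz lt.
have yy : y != y'.
  by apply/eqP => e; move: lt; rewrite e ltxx.
have := Hj y y' yy z Sz.
move=> H; apply/(strict_eq agg Sz yy); apply: H => i.
by rewrite inE => /eqP ->.
Qed.
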